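(* Let $L/K$ be a totally and tamely ramified finite Galois extension of complete local fields with finite residue fields, let $e=[L:K]$ and $G=\mathrm{Gal}(L/K)$, and let $\pi_L,\pi_K$ be uniformizers of $L,K$ with $\pi_L^e=\pi_K$. Every $\alpha\in\mathcal{O}_L$ can be written uniquely as $\alpha=u_0+u_1\pi_L+\dots+u_{e-1}\pi_L^{e-1}$ with $u_i\in\mathcal{O}_K$. For $n\in\mathbb{Z}$, $\pi_L^n\alpha$ is a free generator of $\mathfrak{P}_L^n$ over $\mathcal{O}_K[G]$ if and only if $u_i\in\mathcal{O}_K^\times$ for all $i=0,\dots,e-1$; in particular this holds for $\alpha=1+\pi_L+\dots+\pi_L^{e-1}$.
   Context: A complete local field is a field complete with respect to a non-trivial discrete valuation. Uniformizers $\pi_L,\pi_K$ with $\pi_L^e=\pi_K$ always exist in this situation. *)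

(* Defs.v *)
From HB Require Import structures.
From mathcomp Require Import all_boot all_order all_algebra all_fingroup all_field.
Set Implicit Arguments. Unset Strict Implicit. Unset Printing Implicit Defensive.
Import Order.TTheory GRing.Theory Num.Theory.
Local Open Scope ring_scope.

(* A normalized discrete valuation on a field R, given as v : R -> int whose
   value at 0 is irrelevant (0 is treated as having valuation +oo). *)
Definition is_dval (R : fieldType) (v : R -> int) : Prop :=
  [/\ forall x y, x != 0 -> y != 0 -> v (x * y) = v x + v y,
      forall x y, x != 0 -> y != 0 -> x + y != 0 -> Num.min (v x) (v y) <= v (x + y)
    & exists pi, pi != 0 /\ v pi = 1].

Definition vge (R : fieldType) (v : R -> int) (m : int) (y : R) : Prop :=
  y = 0 \/ m <= v y.

Definition vring (R : fieldType) (v : R -> int) (x : R) : Prop := vge v 0 x.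
Definition vmax (R : fieldType) (v : R -> int) (x : R) : Prop := vge v 1 x.
Definition vpow (R : fieldType) (v : R -> int) (n : int) (x : R) : Prop := vge v n x.
Definition vunit (R : fieldType) (v : R -> int) (x : R) : Prop := x != 0 /\ v x = 0.

Definition vcomplete (R : fieldType) (v : R -> int) : Prop :=
  forall s : nat -> R,
    (forall M : int, exists N : nat, forall m n : nat,
        (N <= m)%N -> (N <= n)%N -> vge v M (s m - s n)) ->
    exists l : R, forall M : int, exists N : nat, forall n : nat,
        (N <= n)%N -> vge v M (s n - l).

(* the residue field O/P is finite *)
Definition finite_residue (R : fieldType) (v : R -> int) : Prop :=
  exists r : seq R, (forall y, y \in r -> vring v y) /\
    forall x, vring v x -> exists2 y, y \in r & vmax v (x - y).

Definition local_field (R : fieldType) (v : R -> int) : Prop :=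
  [/\ is_dval v, vcomplete v & finite_residue v].

Definition residue_char (R : fieldType) (v : R -> int) (p : nat) : Prop :=
  prime p /\ vmax v (p%:R : R).

Definition free_generator (K : fieldType) (L : splittingFieldType K)
    (vK : K -> int) (x : L) (M : L -> Prop) : Prop :=
  [/\ forall a : gal_of {:L} -> K, (forall g, vring vK (a g)) ->
        M (\sum_(g in ('Gal({:L} / 1%VS))%g) a g *: g x),
      forall y, M y -> exists a : gal_of {:L} -> K, (forall g, vring vK (a g)) /\
        y = \sum_(g in ('Gal({:L} / 1%VS))%g) a g *: g x
    & forall a : gal_of {:L} -> K, (forall g, vring vK (a g)) ->
        \sum_(g in ('Gal({:L} / 1%VS))%g) a g *: g x = 0 ->
        forall g, g \in ('Gal({:L} / 1%VS))%g -> a g = 0].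

(* Main.v *)
Require Import Defs.
From HB Require Import structures.
From mathcomp Require Import all_boot all_order all_algebra all_fingroup all_field.
Import Order.TTheory GRing.Theory Num.Theory.
Local Open Scope ring_scope.

From mathcomp Require Import zify ring lra.
Set Implicit Arguments. Unset Strict Implicit. Unset Printing Implicit Defensive.


Lemma mult_small (e i j : nat) (d : int) : (i < e)%N -> (j < e)%N -> e%:Z * d = j%:Z - i%:Z -> i = j.
Proof.
move=> ie je h.
case: (ltgtP d 0) => [dn|dp|d0]; last by move: h; rewrite d0 mulr0; lia.
  have : e%:Z * d <= e%:Z * (-1) by rewrite ler_wpM2l //; lia.
  lia.
have : e%:Z * 1 <= e%:Z * d by rewrite ler_wpM2l //; lia.
lia.
Qed.

Lemma div_small (e i j : nat) : (i < e)%N -> (j < e)%N -> (e %| i + (e - j))%N -> i = j.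
Proof.
move=> ie je /dvdnP [q hq].
case: q hq => [|[|q]] hq; try lia.
Qed.

Section Val.
Variables (R : fieldType) (v : R -> int).
Hypothesis Hv : is_dval v.

Lemma vM x y : x != 0 -> y != 0 -> v (x * y) = v x + v y.
Proof. by case: Hv => h _ _; apply: h. Qed.

Lemma vmin x y : x != 0 -> y != 0 -> x + y != 0 -> Num.min (v x) (v y) <= v (x + y).
Proof. by case: Hv => _ h _; apply: h. Qed.

Lemma v1 : v 1 = 0.
Proof. have h : v (1 * 1) = v 1 + v 1 := vM (oner_neq0 R) (oner_neq0 R). rewrite mulr1 in h; lia. Qed.

Lemma vN x : x != 0 -> v (- x) = v x.
Proof.
move=> x0; have m10 : (-1 : R) != 0 by rewrite oppr_eq0 oner_neq0.
have h1 : v (-1) = 0.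
  have := vM m10 m10; rewrite mulrNN mulr1 v1 => h; lia.
by rewrite -mulN1r vM // h1 add0r.
Qed.

Lemma vX x k : x != 0 -> v (x ^+ k) = k%:Z * v x.
Proof.
move=> x0; elim: k => [|k IH]; first by rewrite expr0 v1 mul0r.
by rewrite exprS vM ?expf_neq0 // IH intS mulrDl mul1r.
Qed.

Lemma vV x : x != 0 -> v x^-1 = - v x.
Proof.
move=> x0; have := vM x0 (invr_neq0 x0); rewrite mulfV // v1 => h; lia.
Qed.

Lemma vXz x (n : int) : x != 0 -> v (x ^ n) = n * v x.
Proof.
move=> x0; case: n => n; first by rewrite vX.
change (v ((x ^+ n.+1)^-1) = Negz n * v x).
by rewrite NegzE vV ?expf_neq0 // vX // mulNr.
Qed.

Lemma vge0 m : vge v m 0. Proof. by left. Qed.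

Lemma vgeN m x : vge v m x -> vge v m (- x).
Proof. by case=> [->|h]; [left; rewrite oppr0|case: (eqVneq x 0)=> [->|x0]; [left; rewrite oppr0|right; rewrite vN]]. Qed.

Lemma vgeD m x y : vge v m x -> vge v m y -> vge v m (x + y).
Proof.
case=> [->|hx]; first by rewrite add0r.
case=> [->|hy]; first by rewrite addr0; right.
case: (eqVneq x 0) => [->|x0]; first by rewrite add0r; right.
case: (eqVneq y 0) => [->|y0]; first by rewrite addr0; right.
case: (eqVneq (x + y) 0) => [->|s0]; first by left.
right; apply: le_trans (vmin x0 y0 s0); by rewrite le_min hx hy.
Qed.

Lemma vgeB m x y : vge v m x -> vge v m y -> vge v m (x - y).
Proof. by move=> hx hy; apply: vgeD => //; apply: vgeN. Qed.

Lemma vge_sum m (I : Type) (r : seq I) (P : pred I) (F : I -> R) :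
  (forall i, P i -> vge v m (F i)) -> vge v m (\sum_(i <- r | P i) F i).
Proof.
move=> h; apply: (big_ind (vge v m)); [exact: vge0|exact: vgeD|exact: h].
Qed.

Lemma vgeM m k x y : vge v m x -> vge v k y -> vge v (m + k) (x * y).
Proof.
case=> [->|hx]; first by rewrite mul0r; left.
case=> [->|hy]; first by rewrite mulr0; left.
case: (eqVneq x 0) => [->|x0]; first by rewrite mul0r; left.
case: (eqVneq y 0) => [->|y0]; first by rewrite mulr0; left.
by right; rewrite vM // lerD.
Qed.

Lemma vge_le m k x : k <= m -> vge v m x -> vge v k x.
Proof. by move=> km [->|h]; [left|right; apply: le_trans h]. Qed.

Lemma vge_v x : vge v (v x) x.
Proof. by right. Qed.

Lemma vdom x y : x != 0 -> vge v (v x + 1) y -> x + y != 0 /\ v (x + y) = v x.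
Proof.
move=> x0 hy.
have s0 : x + y != 0.
  apply/eqP=> s0; have yE : y = - x by apply/eqP; rewrite -addr_eq0 addrC s0.
  rewrite yE in hy; case: hy => [/eqP|]; first by rewrite oppr_eq0 (negPf x0).
  by rewrite vN //; lia.
split => //.
case: (eqVneq y 0) => [->|y0]; first by rewrite addr0.
have h1 := vmin x0 y0 s0.
have hy' : v x + 1 <= v y by case: hy => // /eqP; rewrite (negPf y0).
have h2 : Num.min (v (x+y)) (v (-y)) <= v (x + y - y).
  by apply: vmin => //; rewrite ?oppr_eq0 ?addrK.
rewrite addrK vN // in h2.
move: h1 h2; rewrite !ge_min => /orP[] h1 /orP[] h2; lia.
Qed.

End Val.


Section Val2.
Variables (R : fieldType) (v : R -> int).
Hypothesis Hv : is_dval v.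

Lemma vsum_distinct (t : nat -> R) k :
  (forall i j, (i < k)%N -> (j < k)%N -> t i != 0 -> t j != 0 -> v (t i) = v (t j) -> i = j) ->
  (forall i, (i < k)%N -> t i = 0) \/
  [/\ \sum_(i < k) t i != 0,
      exists2 i0, (i0 < k)%N & t i0 != 0 /\ v (\sum_(i < k) t i) = v (t i0) &
      forall i, (i < k)%N -> t i != 0 -> v (\sum_(i < k) t i) <= v (t i)].
Proof.
elim: k => [|k IH] hd; first by left.
have hd' : forall i j, (i < k)%N -> (j < k)%N -> t i != 0 -> t j != 0 -> v (t i) = v (t j) -> i = j.
  by move=> i j ik jk; apply: hd; apply: ltnW.
rewrite big_ord_recr /=.
case: (IH hd') => [h0|[S0 [i0 i0k [ti0 vi0]] hb]].
  have -> : \sum_(i < k) t i = 0 by rewrite big1 // => i _; apply: h0.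
  rewrite add0r; case: (eqVneq (t k) 0) => [tk|tk0].
    by left=> i; rewrite ltnS leq_eqVlt => /orP[/eqP->|/h0].
  right; split => //; first by exists k.
  by move=> i; rewrite ltnS leq_eqVlt => /orP[/eqP->|/h0->]; [move=> _|rewrite eqxx].
set S := \sum_(i < k) t i in S0 vi0 hb *.
case: (eqVneq (t k) 0) => [tk|tk0].
  rewrite tk addr0; right; split => //; first by exists i0 => //; apply: ltnW.
  by move=> i; rewrite ltnS leq_eqVlt => /orP[/eqP->|/hb//]; rewrite tk eqxx.
have neq : v S != v (t k).
  apply/eqP; rewrite vi0 => /(hd _ _ (ltnW i0k) (ltnSn k) ti0 tk0) ik.
  by move: i0k; rewrite ik ltnn.
case: (ltgtP (v S) (v (t k))) => [lt|gt|e]; last by move: neq; rewrite e eqxx.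
  have hlt : v S + 1 <= v (t k) by lia.
  have [s0 vs] := vdom Hv S0 (vge_le hlt (vge_v v (t k))).
  right; split => //; first by exists i0 => //; [apply: ltnW | rewrite vs].
  move=> i; rewrite ltnS leq_eqVlt vs => /orP[/eqP->_|/hb//]; exact: ltW.
have hlt : v (t k) + 1 <= v S by lia.
have [s0 vs] := vdom Hv tk0 (vge_le hlt (vge_v v S)).
rewrite addrC; right; split => //; first by exists k => //; rewrite vs.
move=> i; rewrite ltnS leq_eqVlt vs => /orP[/eqP->//|ik ti].
exact: le_trans (ltW gt) (hb _ ik ti).
Qed.

End Val2.


Section Main.
Variables (K : fieldType) (L : splittingFieldType K)
  (vK : K -> int) (vL : L -> int) (piK : K) (piL : L).
Hypotheses (HK : local_field vK) (HL : local_field vL) (Hgal : galois 1%VS {:L})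
  (Hram : forall a : K, a != 0 -> vL (a%:A) = (\dim {:L})%:Z * vK a)
  (Htame : forall p : nat, residue_char vK p -> ~~ (p %| \dim {:L})%N)
  (piK0 : piK != 0) (vpiK : vK piK = 1) (piL0 : piL != 0) (vpiL : vL piL = 1)
  (Hpi : piL ^+ (\dim {:L}) = piK%:A).

Local Notation e := (\dim {:L}).

Lemma HvK : is_dval vK. Proof. by case: HK. Qed.
Lemma HvL : is_dval vL. Proof. by case: HL. Qed.

Lemma e_gt0 : (0 < e)%N. Proof. exact: adim_gt0. Qed.

Lemma alg_eq0 (c : K) : (c%:A == 0 :> L) = (c == 0).
Proof. by rewrite scaler_eq0 oner_eq0 orbF. Qed.

Lemma alg_inj (a b : K) : a%:A = b%:A :> L -> a = b.
Proof.
move=> h; apply/eqP; rewrite -subr_eq0 -(alg_eq0 (a - b)) scalerBl h subrr //.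
Qed.

Lemma vterm (c : K) (i : nat) : c != 0 ->
  vL (c%:A * piL ^+ i) = e%:Z * vK c + i%:Z.
Proof.
move=> c0; rewrite (vM HvL) ?alg_eq0 ?expf_neq0 // Hram // (vX HvL) // vpiL mulr1 //.
Qed.

Lemma expansion (c : nat -> K) :
  (forall i, (i < e)%N -> c i = 0) \/
  (\sum_(i < e) (c i)%:A * piL ^+ i != 0 /\
   forall i, (i < e)%N -> c i != 0 ->
     vL (\sum_(i < e) (c i)%:A * piL ^+ i) <= e%:Z * vK (c i) + i%:Z).
Proof.
have := @vsum_distinct _ _ HvL (fun i => (c i)%:A * piL ^+ i) e.
case.
- move=> i j ie je; rewrite !mulf_eq0 !alg_eq0 !expf_eq0 (negPf piL0) !andbF !orbF.
  move=> ci cj; rewrite !vterm // => h.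
  apply: (mult_small ie je (d := vK (c i) - vK (c j))).
  by rewrite mulrBr; lia.
- move=> h; left=> i ie; have := h i ie.
  by move/eqP; rewrite mulf_eq0 alg_eq0 expf_eq0 (negPf piL0) andbF orbF => /eqP.
- case=> s0 _ hb; right; split => // i ie ci.
  rewrite -vterm //; apply: hb => //.
  by rewrite mulf_neq0 ?alg_eq0 ?expf_neq0.
Qed.

Lemma indep (c : nat -> K) :
  \sum_(i < e) (c i)%:A * piL ^+ i = 0 -> forall i, (i < e)%N -> c i = 0.
Proof. by case: (expansion c) => // -[/eqP]. Qed.


Definition ext_ord (k : 'I_e -> K) (n : nat) : K := odflt 0 (omap k (insub n)).

Lemma ext_ordE (k : 'I_e -> K) (i : 'I_e) : ext_ord k i = k i.
Proof. by rewrite /ext_ord valK. Qed.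

Lemma basis_exists (x : L) :
  exists c : nat -> K, x = \sum_(i < e) (c i)%:A * piL ^+ i.
Proof.
pose X := [tuple piL ^+ i | i < e].
have hX : forall i : 'I_e, X`_i = piL ^+ i.
  by move=> i; rewrite -tnth_nth tnth_mktuple.
have fX : free X.
  apply/freeP => k hk i.
  have := indep (c := ext_ord k) _ (ltn_ord i); rewrite ext_ordE; apply.
  rewrite -[RHS]hk; apply: eq_bigr => j _.
  by rewrite ext_ordE hX mulr_algl.
have bX : basis_of fullv X by rewrite basisEfree fX subvf size_tuple leqnn.
exists (ext_ord (fun i => coord X i x)).
rewrite {1}(coord_basis bX (memvf x)); apply: eq_bigr => i _.
by rewrite ext_ordE hX mulr_algl.
Qed.

Lemma part1 (alpha : L) : vring vL alpha ->
  exists u : nat -> K, (forall i, (i < e)%N -> vring vK (u i)) /\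
    alpha = \sum_(i < e) (u i)%:A * piL ^+ i.
Proof.
move=> ha; have [c hc] := basis_exists alpha.
exists c; split => // i ie.
case: (expansion c) => [h|[s0 hb]]; first by left; apply: h.
case: (eqVneq (c i) 0) => [->|ci]; first by left.
right; have := hb i ie ci; rewrite -hc.
case: ha => [a0|]; first by move: s0; rewrite -hc a0 eqxx.
move=> h1 h2; have : 0 <= e%:Z * vK (c i) + i%:Z by apply: le_trans h1 h2.
move: (vK (c i)) => d hd; case: (ltgtP d 0) => // dn.
have : e%:Z * d <= e%:Z * (-1) by rewrite ler_wpM2l //; lia.
lia.
Qed.

Lemma part2 (u w : nat -> K) :
  \sum_(i < e) (u i)%:A * piL ^+ i = \sum_(i < e) (w i)%:A * piL ^+ i ->
  forall i, (i < e)%N -> u i = w i.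
Proof.
move=> h i ie; apply/eqP; rewrite -subr_eq0; apply/eqP.
apply: (indep (c := fun i => u i - w i)) ie.
rewrite (eq_bigr (fun i : 'I_e => (u i)%:A * piL ^+ i - (w i)%:A * piL ^+ i)).
  by rewrite sumrB h subrr.
by move=> j _; rewrite scalerBl mulrBl.
Qed.


Local Notation G := ('Gal({:L} / 1%VS))%g.

Lemma inG (g : gal_of {:L}) : g \in G.
Proof. by rewrite gal_kAut ?sub1v // kAut1E subvf. Qed.

Lemma gal_alg (g : gal_of {:L}) (c : K) : g (c%:A) = c%:A.
Proof. by rewrite linearZ /= rmorph1. Qed.

Lemma gal_neq0 (g : gal_of {:L}) (x : L) : (g x == 0) = (x == 0).
Proof. exact: fmorph_eq0. Qed.

Definition z (g : gal_of {:L}) : L := g piL / piL.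

Lemma gal_pi (g : gal_of {:L}) : g piL = z g * piL.
Proof. by rewrite /z divfK. Qed.

Lemma z_e (g : gal_of {:L}) : z g ^+ e = 1.
Proof.
have h1 : g (piL ^+ e) = g piL ^+ e := rmorphXn _ _ _.
by rewrite /z expr_div_n -h1 Hpi gal_alg -Hpi divff // expf_neq0.
Qed.


Lemma galM' (g : gal_of {:L}) x y : g (x * y) = g x * g y.
Proof. exact: rmorphM. Qed.
Lemma galX' (g : gal_of {:L}) x k : g (x ^+ k) = g x ^+ k.
Proof. exact: rmorphXn. Qed.
Lemma galB' (g : gal_of {:L}) x y : g (x - y) = g x - g y.
Proof. exact: rmorphB. Qed.
Lemma gal1' (g : gal_of {:L}) : g 1 = 1.
Proof. exact: rmorph1. Qed.
Lemma gal_sum' (g : gal_of {:L}) (I : Type) (r : seq I) (P : pred I) (F : I -> L) :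
  g (\sum_(i <- r | P i) F i) = \sum_(i <- r | P i) g (F i).
Proof. exact: rmorph_sum. Qed.

Lemma z_neq0 (g : gal_of {:L}) : z g != 0.
Proof. by rewrite /z mulf_neq0 ?invr_eq0 // gal_neq0. Qed.

Lemma vz (g : gal_of {:L}) : vL (z g) = 0.
Proof.
have := vX HvL e (z_neq0 g); rewrite z_e (v1 HvL) => /eqP.
rewrite eq_sym mulf_eq0 => /orP[|/eqP //]; have := e_gt0; lia.
Qed.

Lemma gal_exp (g : gal_of {:L}) (c : nat -> K) :
  g (\sum_(i < e) (c i)%:A * piL ^+ i) = \sum_(i < e) (c i)%:A * (z g ^+ i * piL ^+ i).
Proof.
rewrite gal_sum'; apply: eq_bigr => i _.
by rewrite galM' gal_alg galX' gal_pi exprMn.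
Qed.

Lemma valg_ge (c : K) m : vge vK m c -> vge vL (e%:Z * m) c%:A.
Proof.
case=> [->|h]; first by left; rewrite scale0r.
case: (eqVneq c 0) => [->|c0]; first by left; rewrite scale0r.
by right; rewrite Hram // ler_wpM2l.
Qed.

Lemma vpow_ge (i : nat) : vge vL i%:Z (piL ^+ i).
Proof. by right; rewrite (vX HvL) // vpiL mulr1. Qed.

Lemma gal_ring_diff (g : gal_of {:L}) x : vring vL x -> vge vL 1 (g x - x).
Proof.
move=> /part1 [c [hc ->]]; rewrite gal_exp -sumrB.
apply: (vge_sum HvL) => i _.
rewrite -mulrBr -{2}[piL ^+ i]mul1r -mulrBl.
have -> : (1 : int) = e%:Z * 0 + 1 by rewrite mulr0 add0r.
apply: (vgeM HvL); first exact: valg_ge (hc _ (ltn_ord i)).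
case: (posnP i) => [-> | ip]; first by rewrite expr0 subrr mul0r; left.
rewrite (_ : (1:int) = 0 + 1) //; apply: (vgeM HvL).
  apply: (vgeB HvL); right; rewrite ?(vX HvL) ?z_neq0 ?vz ?mulr0 ?(v1 HvL) //.
apply: vge_le (vpow_ge i); lia.
Qed.


Lemma natr_vge (n : nat) : vge vK 0 (n%:R : K).
Proof.
elim: n => [|n IH]; first by left.
rewrite -addn1 natrD; apply: (vgeD HvK) IH _; right; by rewrite (v1 HvK).
Qed.

Lemma natr_unit (n : nat) : (0 < n)%N ->
  (forall p, prime p -> (p %| n)%N -> ~ vmax vK (p%:R : K)) ->
  (n%:R : K) != 0 /\ vK n%:R = 0.
Proof.
elim: n {-2}n (leqnn n) => [|N IH] n nN n0 hp.
  by move: n0; rewrite lt0n; move: nN; rewrite leqn0 => ->.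
case: (eqVneq n 1%N) => [->|n1]; first by rewrite oner_neq0 (v1 HvK).
have n1' : (1 < n)%N by lia.
set p := pdiv n.
have pp : prime p by apply: pdiv_prime.
have pn : (p %| n)%N by exact: pdiv_dvd.
have hm : (n %/ p < n)%N by apply: ltn_Pdiv => //; apply: prime_gt1.
have m0 : (0 < n %/ p)%N by rewrite divn_gt0 ?prime_gt0 // dvdn_leq.
have [mz vm] : ((n %/ p)%:R : K) != 0 /\ vK (n %/ p)%:R = 0.
  apply: IH => //; first by lia.
  move=> q qp qm; apply: hp => //; apply: dvdn_trans qm _; exact: dvdn_div.
have [pz vp] : (p%:R : K) != 0 /\ vK p%:R = 0.
  case: (natr_vge p) => [p0|h].
    by exfalso; apply: (hp p pp pn); left.
  case: (eqVneq (p%:R : K) 0) => [p0|pz]; first by exfalso; apply: (hp p pp pn); left.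
  split => //; apply/eqP; rewrite eq_le h andbT.
  case: ltP => // hlt; exfalso; apply: (hp p pp pn); right; lia.
rewrite -(divnK pn) natrM (vM HvK) // vp vm addr0; split => //; exact: mulf_neq0.
Qed.

Lemma e_unit : (e%:R : K) != 0 /\ vK e%:R = 0.
Proof.
apply: natr_unit; first exact: e_gt0.
by move=> p pp pe hv; have := Htame (conj pp hv); rewrite pe.
Qed.

Lemma eL_v : (e%:R : L) != 0 /\ vL e%:R = 0.
Proof.
have [h1 h2] := e_unit.
have -> : (e%:R : L) = (e%:R : K)%:A by rewrite scaler_nat.
by rewrite alg_eq0 h1 Hram // h2 mulr0.
Qed.


Lemma root_v (w : L) : w ^+ e = 1 -> w != 0 /\ vL w = 0.
Proof.
move=> we; have w0 : w != 0.
  by apply/eqP => w0; move: we; rewrite w0 expr0n; have := e_gt0; case: e => // n _ /eqP; rewrite eq_sym oner_eq0.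
split => //; have := vX HvL e w0; rewrite we (v1 HvL) => /eqP.
rewrite eq_sym mulf_eq0 => /orP[|/eqP //]; have := e_gt0; lia.
Qed.

Lemma vge0_pow (w : L) k : vL w = 0 -> w != 0 -> vge vL 0 (w ^+ k).
Proof. by move=> vw w0; right; rewrite (vX HvL) // vw mulr0. Qed.

Lemma root_unity_1 (w : L) : w ^+ e = 1 -> vge vL 1 (w - 1) -> w = 1.
Proof.
move=> we hw; have [w0 vw] := root_v we.
set S := \sum_(k < e) w ^+ k.
have hS : (w - 1) * S = 0 by rewrite -subrX1 we subrr.
have hd : vge vL 1 (S - e%:R).
  have -> : S - e%:R = \sum_(k < e) (w ^+ k - 1).
    by rewrite sumrB sumr_const card_ord.
  apply: (vge_sum HvL) => k _; rewrite subrX1 (_ : (1:int) = 1 + 0) //.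
  apply: (vgeM HvL) hw _; apply: (vge_sum HvL) => j _; exact: vge0_pow.
have [e0 ve] := eL_v.
case: (eqVneq S 0) => [S0|S0].
  move: hd; rewrite S0 sub0r => /(vgeN HvL); rewrite opprK; case=> [/eqP|]; first by rewrite (negPf e0).
  by rewrite ve.
by apply/eqP; rewrite -subr_eq0; move/eqP: hS; rewrite mulf_eq0 (negPf S0) orbF.
Qed.


Lemma z_fixed (t g : gal_of {:L}) : t (z g) = z g.
Proof.
have [z0 vz0] := root_v (z_e g).
set w := t (z g) / z g.
have we : w ^+ e = 1 by rewrite /w expr_div_n -galX' z_e gal1' divr1.
have hw : vge vL 1 (w - 1).
  have -> : w - 1 = (t (z g) - z g) * (z g)^-1 by rewrite mulrBl divff.
  rewrite (_ : (1:int) = 1 + 0) //; apply: (vgeM HvL).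
    by apply: gal_ring_diff; right; rewrite vz0.
  by right; rewrite (vV HvL) // vz0 oppr0.
by have := root_unity_1 we hw; rewrite /w => /divr1_eq.
Qed.

Lemma z_in_K (g : gal_of {:L}) : exists c : K, z g = c%:A.
Proof.
move/galois_fixedField: Hgal => fixE.
have : z g \in fixedField G.
  by apply/fixedFieldP; [exact: memvf | move=> t _; exact: z_fixed].
rewrite fixE => /vlineP [c ->]; by exists c.
Qed.


Lemma z_in_K' (g : gal_of {:L}) : exists c : K, z g == c%:A.
Proof. by have [c hc] := z_in_K g; exists c; rewrite hc. Qed.

Definition zK (g : gal_of {:L}) : K := xchoose (z_in_K' g).

Lemma zKE (g : gal_of {:L}) : (zK g)%:A = z g.
Proof. by rewrite (eqP (xchooseP (z_in_K' g))). Qed.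

Lemma algX (a : K) k : (a ^+ k)%:A = a%:A ^+ k :> L.
Proof. exact: (rmorphXn (in_alg L)). Qed.
Lemma algM (a b : K) : (a * b)%:A = a%:A * b%:A :> L.
Proof. exact: (rmorphM (in_alg L)). Qed.
Lemma alg1 : (1 : K)%:A = 1 :> L.
Proof. exact: scale1r. Qed.
Lemma alg_sum (I : Type) (r : seq I) (P : pred I) (F : I -> K) :
  (\sum_(i <- r | P i) F i)%:A = \sum_(i <- r | P i) (F i)%:A :> L.
Proof. exact: (rmorph_sum (in_alg L)). Qed.

Lemma zK_e (g : gal_of {:L}) : zK g ^+ e = 1.
Proof. by apply: alg_inj; rewrite algX zKE z_e alg1. Qed.

Lemma zK_neq0 g : zK g != 0.
Proof. by rewrite -alg_eq0 zKE z_neq0. Qed.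

Lemma vzK g : vK (zK g) = 0.
Proof.
have := Hram (zK_neq0 g); rewrite zKE vz => /eqP; rewrite eq_sym mulf_eq0.
case/orP => [|/eqP //]; have := e_gt0; lia.
Qed.

Lemma z_hom (g h : gal_of {:L}) : z (g * h)%g = z g * z h.
Proof.
apply: (mulIf piL0); rewrite -gal_pi galM ?memvf // gal_pi galM' gal_pi.
by rewrite z_fixed mulrA.
Qed.

Lemma zK_hom (g h : gal_of {:L}) : zK (g * h)%g = zK g * zK h.
Proof. by apply: alg_inj; rewrite algM !zKE z_hom. Qed.

Lemma z_inj (g h : gal_of {:L}) : zK g = zK h -> g = h.
Proof.
move=> hz; apply/eqP/gal_eqP => x _.
have [c ->] := basis_exists x.
by rewrite !gal_exp -!zKE hz.
Qed.

Lemma cardG : #|G| = e.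
Proof. by rewrite -(galois_dim Hgal) dimv1 divn1. Qed.

Lemma exists_nontriv (k : nat) : ~~ (e %| k)%N -> exists t : gal_of {:L}, zK t ^+ k != 1.
Proof.
move=> nd.
case: (boolP [forall t, zK t ^+ k == 1]) => [/forallP hall|]; last first.
  by rewrite negb_forall => /existsP [t ht]; exists t.
exfalso.
set r := (k %% e)%N.
have r0 : (0 < r)%N by rewrite lt0n; move: nd; rewrite /dvdn.
have re : (r < e)%N by rewrite ltn_pmod // e_gt0.
have hr : forall t, zK t ^+ r = 1.
  move=> t; have := eqP (hall t).
  by rewrite (divn_eq k e) exprD mulnC exprM zK_e expr1n mul1r.
set rs := [seq zK t | t <- enum G].
have sz : size ('X^r - 1 : {poly K}) = r.+1 by rewrite -polyC1 size_XnsubC.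
have p0 : ('X^r - 1 : {poly K}) != 0 by rewrite -size_poly_eq0 sz.
have hroot : all (root ('X^r - 1)) rs.
  by apply/allP => x /mapP [t _ ->]; rewrite rootE !hornerE hr subrr.
have hu : uniq rs by rewrite map_inj_uniq ?enum_uniq //; move=> a b; exact: z_inj.
have := max_poly_roots p0 hroot hu.
have -> : size rs = e by rewrite size_map -cardE cardG.
rewrite sz; lia.
Qed.

Lemma ortho_ndiv (k : nat) : ~~ (e %| k)%N -> \sum_(g in G) zK g ^+ k = 0.
Proof.
move=> nd; have [t ht] := exists_nontriv nd.
set S := \sum_(g in G) zK g ^+ k.
have hS : S = zK t ^+ k * S.
  rewrite {1}/S (reindex_inj (mulgI t)) /= mulr_sumr.
  apply: eq_big => [g|g _]; first by rewrite !inG.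
  by rewrite zK_hom exprMn.
apply/eqP; move/eqP: hS; rewrite -subr_eq0 -{1}[S]mul1r -mulrBl mulf_eq0 subr_eq0 eq_sym (negPf ht) /=.
by [].
Qed.

Lemma ortho_div (k : nat) : (e %| k)%N -> \sum_(g in G) zK g ^+ k = e%:R.
Proof.
move=> /dvdnP [q ->].
rewrite (eq_bigr (fun _ => 1)) ?sumr_const ?cardG //.
by move=> g _; rewrite mulnC exprM zK_e expr1n.
Qed.


Lemma galXz (g : gal_of {:L}) x (n : int) : g (x ^ n) = g x ^ n.
Proof. exact: fmorphXz. Qed.

Lemma algXz (a : K) (n : int) : (a ^ n)%:A = a%:A ^ n :> L.
Proof. exact: (fmorphXz (in_alg L)). Qed.

Definition cc (n : int) (a : gal_of {:L} -> K) (i : nat) : K :=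
  \sum_(g in G) a g * zK g ^ n * zK g ^+ i.

Lemma Tformula (n : int) (u : nat -> K) (a : gal_of {:L} -> K) :
  \sum_(g in G) a g *: g (piL ^ n * \sum_(i < e) (u i)%:A * piL ^+ i) =
  piL ^ n * \sum_(i < e) (cc n a i * u i)%:A * piL ^+ i.
Proof.
have step : forall g : gal_of {:L},
    a g *: g (piL ^ n * \sum_(i < e) (u i)%:A * piL ^+ i) =
    piL ^ n * \sum_(i < e) (a g * zK g ^ n * zK g ^+ i * u i)%:A * piL ^+ i.
  move=> g; rewrite galM' galXz gal_pi expfzMl gal_exp -zKE -algXz -[a g *: _]mulr_algl.
  rewrite !mulr_sumr; apply: eq_bigr => i _.
  rewrite !algM algX; ring.
rewrite (eq_bigr _ (fun g _ => step g)) -mulr_sumr exchange_big /=.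
congr (_ * _); apply: eq_bigr => i _.
by rewrite -mulr_suml -alg_sum /cc mulr_suml.
Qed.

Lemma vge0_unit (x : K) : vK x = 0 -> vge vK 0 x.
Proof. by move=> h; right; rewrite h. Qed.

Lemma zKz_vge (g : gal_of {:L}) (n : int) : vge vK 0 (zK g ^ n).
Proof. by right; rewrite (vXz HvK) ?zK_neq0 // vzK mulr0. Qed.

Lemma zKX_vge (g : gal_of {:L}) (i : nat) : vge vK 0 (zK g ^+ i).
Proof. by right; rewrite (vX HvK) ?zK_neq0 // vzK mulr0. Qed.

Lemma vge00 (R : fieldType) (v : R -> int) (Hv : is_dval v) x y :
  vge v 0 x -> vge v 0 y -> vge v 0 (x * y).
Proof. by move=> hx hy; have := vgeM Hv hx hy; rewrite addr0. Qed.

Lemma cc_vring n a i : (forall g, vring vK (a g)) -> vring vK (cc n a i).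
Proof.
move=> ha; apply: (vge_sum HvK) => g _.
by apply: (vge00 HvK); [apply: (vge00 HvK); [apply: ha|apply: zKz_vge]|apply: zKX_vge].
Qed.

Lemma vpiz (n : int) : vL (piL ^ n) = n.
Proof. by rewrite (vXz HvL) // vpiL mulr1. Qed.

Lemma T_mem (n : int) (u : nat -> K) (a : gal_of {:L} -> K) :
  (forall i, (i < e)%N -> vring vK (u i)) -> (forall g, vring vK (a g)) ->
  vpow vL n (piL ^ n * \sum_(i < e) (cc n a i * u i)%:A * piL ^+ i).
Proof.
move=> hu ha; rewrite /vpow; apply: (vge_le (m := n + 0)); first by rewrite addr0.
apply: (vgeM HvL); first by right; rewrite vpiz.
apply: (vge_sum HvL) => i _; apply: (vge_le (m := 0 + 0)) => //; apply: (vgeM HvL).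
  have := valg_ge (vge00 HvK (cc_vring n i ha) (hu _ (ltn_ord i))); by rewrite mulr0.
exact: vge_le (vpow_ge i).
Qed.


Lemma cc_inv (n : int) (f : nat -> K) i : (i < e)%N ->
  cc n (fun g => e%:R^-1 * \sum_(j < e) f j * (zK g ^ n)^-1 * zK g ^+ (e - j)) i = f i.
Proof.
move=> ie; rewrite /cc.
have h1 : forall g : gal_of {:L},
    (e%:R^-1 * \sum_(j < e) f j * (zK g ^ n)^-1 * zK g ^+ (e - j)) * zK g ^ n * zK g ^+ i =
    e%:R^-1 * \sum_(j < e) f j * zK g ^+ (i + (e - j)).
  move=> g; rewrite -!mulrA; congr (_ * _); rewrite !mulr_suml; apply: eq_bigr => j _.
  have nz : zK g ^ n != 0 by rewrite expfz_neq0 // zK_neq0.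
  rewrite exprD; field; exact: nz.
rewrite (eq_bigr _ (fun g _ => h1 g)) -mulr_sumr exchange_big /=.
rewrite (eq_bigr (fun j : 'I_e => f j * \sum_(g in G) zK g ^+ (i + (e - j)))); last first.
  by move=> j _; rewrite mulr_sumr.
rewrite (bigD1 (Ordinal ie)) //= [X in _ + X]big1 ?addr0.
  rewrite subnKC ?(ltnW ie) // (ortho_div (dvdnn _)) mulrCA mulVf ?mulr1 //; exact: e_unit.1.
move=> j hj; rewrite ortho_ndiv ?mulr0 //; apply/negP => /(div_small ie (ltn_ord j)) h.
by move: hj; rewrite eqE /= h eqxx.
Qed.

Lemma T_gen (n : int) (u : nat -> K) :
  (forall i, (i < e)%N -> vunit vK (u i)) ->
  forall y, vpow vL n y -> exists a : gal_of {:L} -> K, (forall g, vring vK (a g)) /\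
    y = \sum_(g in G) a g *: g (piL ^ n * \sum_(i < e) (u i)%:A * piL ^+ i).
Proof.
move=> hu y hy.
have pn0 : piL ^ n != 0 by rewrite expfz_neq0.
have hy' : vring vL (y * (piL ^ n)^-1).
  case: hy => [->|hy]; first by left; rewrite mul0r.
  case: (eqVneq y 0) => [->|y0]; first by left; rewrite mul0r.
  right; rewrite (vM HvL) // ?invr_eq0 // (vV HvL) // vpiz; lia.
have [d [hd hdy]] := part1 hy'.
pose f j := d j / u j.
exists (fun g => e%:R^-1 * \sum_(j < e) f j * (zK g ^ n)^-1 * zK g ^+ (e - j)); split.
  move=> g; apply: (vge00 HvK).
    by right; rewrite (vV HvK) ?e_unit.1 // e_unit.2 oppr0.
  apply: (vge_sum HvK) => j _; apply: (vge00 HvK); last exact: zKX_vge.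
  apply: (vge00 HvK); last first.
    by right; rewrite (vV HvK) ?expfz_neq0 ?zK_neq0 // (vXz HvK) ?zK_neq0 // vzK mulr0 oppr0.
  rewrite /f; have [u0 vu] := hu _ (ltn_ord j).
  case: (hd _ (ltn_ord j)) => [->|h]; first by left; rewrite mul0r.
  case: (eqVneq (d j) 0) => [->|d0]; first by left; rewrite mul0r.
  by right; rewrite (vM HvK) ?invr_eq0 // (vV HvK) // vu oppr0 addr0.
rewrite Tformula.
have -> : y = piL ^ n * (y * (piL ^ n)^-1) by rewrite mulrCA mulfV ?mulr1.
rewrite hdy; congr (_ * _); apply: eq_bigr => i _.
rewrite cc_inv // /f divfK //; exact: (hu _ (ltn_ord i)).1.
Qed.

Lemma T_indep (n : int) (u : nat -> K) (a : gal_of {:L} -> K) :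
  (forall i, (i < e)%N -> u i != 0) ->
  \sum_(g in G) a g *: g (piL ^ n * \sum_(i < e) (u i)%:A * piL ^+ i) = 0 ->
  forall g, g \in G -> a g = 0.
Proof.
move=> hu; rewrite Tformula => /eqP; rewrite mulf_eq0 expfz_eq0 (negPf piL0) andbF /= => /eqP h0.
have hc : forall i, (i < e)%N -> cc n a i = 0.
  move=> i ie; have := indep (c := fun i => cc n a i * u i) h0 ie.
  by move/eqP; rewrite mulf_eq0 (negPf (hu _ ie)) orbF => /eqP.
move=> t _.
pose b g := a g * zK g ^ n.
have hX : \sum_(i < e) cc n a i * zK t ^+ (e - i) = b t * e%:R.
  transitivity (\sum_(g in G) b g * \sum_(i < e) (zK g / zK t) ^+ i).
    rewrite /cc (eq_bigr (fun i : 'I_e => \sum_(g in G) a g * zK g ^ n * zK g ^+ i * zK t ^+ (e - i))); last first.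
      by move=> i _; rewrite mulr_suml.
    rewrite exchange_big /=; apply: eq_bigr => g _.
    rewrite mulr_sumr; apply: eq_bigr => i _.
    have hinv : (zK t ^+ i)^-1 = zK t ^+ (e - i).
      by apply: mulr1_eq; rewrite -exprD subnKC ?zK_e // ltnW.
    by rewrite expr_div_n -hinv /b; rewrite -!mulrA.
  rewrite (bigD1 t) ?inG //= [X in _ + X]big1 ?addr0.
    rewrite divff ?zK_neq0 // (eq_bigr (fun _ => 1)) ?sumr_const ?card_ord //.
    by move=> i _; rewrite expr1n.
  move=> g hg; set w := zK g / zK t.
  have w1 : w != 1.
    rewrite /w; apply/eqP => /divr1_eq /z_inj h; move: hg; by rewrite h eqxx ?andbF.
  have we : w ^+ e = 1 by rewrite /w expr_div_n !zK_e divr1.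
  have : (w - 1) * \sum_(i < e) w ^+ i = 0 by rewrite -subrX1 we subrr.
  move/eqP; rewrite mulf_eq0 subr_eq0 (negPf w1) /= => /eqP ->; by rewrite mulr0.
have : b t * e%:R = 0 by rewrite -hX big1 // => i _; rewrite hc ?mul0r.
move/eqP; rewrite mulf_eq0 (negPf e_unit.1) orbF /b mulf_eq0 expfz_eq0 (negPf (zK_neq0 t)) andbF orbF.
by move/eqP.
Qed.


Lemma pi_as_sum (i : nat) : (i < e)%N ->
  piL ^+ i = \sum_(j < e) ((j == i :> nat)%:R : K)%:A * piL ^+ j.
Proof.
move=> ie; rewrite (bigD1 (Ordinal ie)) //= eqxx alg1 mul1r [X in _ + X]big1 ?addr0 //.
move=> j hj; have -> : (j == i :> nat) = false.
  by apply/negbTE; apply: contra hj => /eqP h; apply/eqP/val_inj.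
by rewrite scale0r mul0r.
Qed.

Lemma T_units (n : int) (u : nat -> K) :
  (forall i, (i < e)%N -> vring vK (u i)) ->
  (forall y, vpow vL n y -> exists a : gal_of {:L} -> K, (forall g, vring vK (a g)) /\
    y = \sum_(g in G) a g *: g (piL ^ n * \sum_(i < e) (u i)%:A * piL ^+ i)) ->
  forall i, (i < e)%N -> vunit vK (u i).
Proof.
move=> hu hgen i ie.
have hy : vpow vL n (piL ^ (n + i%:Z)).
  by right; rewrite vpiz; lia.
have [a [ha hya]] := hgen _ hy.
move: hya; rewrite Tformula expfzDr // => /(mulfI (expfz_neq0 n piL0)).
rewrite -exprnP (pi_as_sum ie) => /esym H.
have h := part2 (u := fun j => cc n a j * u j) (w := fun j => ((j == i :> nat)%:R : K)) H.
have := h i ie; rewrite eqxx => hci.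
have u0 : u i != 0 by apply/eqP => u0; move: hci; rewrite u0 mulr0 => /eqP; rewrite eq_sym oner_eq0.
split => //.
have c0 : cc n a i != 0 by apply/eqP => c0; move: hci; rewrite c0 mul0r => /eqP; rewrite eq_sym oner_eq0.
have := vM HvK c0 u0; rewrite hci (v1 HvK).
case: (cc_vring n i ha) => [/eqP|h1]; first by rewrite (negPf c0).
case: (hu _ ie) => [/eqP|h2]; first by rewrite (negPf u0).
lia.
Qed.

Theorem main_thm :
  (forall alpha : L, vring vL alpha ->
     exists u : nat -> K, (forall i, (i < e)%N -> vring vK (u i)) /\
       alpha = \sum_(i < e) (u i)%:A * piL ^+ i) /\
  (forall u w : nat -> K,
     (forall i, (i < e)%N -> vring vK (u i)) ->
     (forall i, (i < e)%N -> vring vK (w i)) ->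
     \sum_(i < e) (u i)%:A * piL ^+ i =
       \sum_(i < e) (w i)%:A * piL ^+ i ->
     forall i, (i < e)%N -> u i = w i) /\
  (forall (n : int) (u : nat -> K),
     (forall i, (i < e)%N -> vring vK (u i)) ->
     (free_generator vK (piL ^ n * \sum_(i < e) (u i)%:A * piL ^+ i)
        (vpow vL n)
      <-> (forall i, (i < e)%N -> vunit vK (u i)))) /\
  (forall n : int,
     free_generator vK (piL ^ n * \sum_(i < e) piL ^+ i) (vpow vL n)).
Proof.
have P3 : forall (n : int) (u : nat -> K),
     (forall i, (i < e)%N -> vring vK (u i)) ->
     (free_generator vK (piL ^ n * \sum_(i < e) (u i)%:A * piL ^+ i)
        (vpow vL n)
      <-> (forall i, (i < e)%N -> vunit vK (u i))).
  move=> n u hu; split.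
    by case=> _ hgen _; exact: (T_units hu hgen).
  move=> hun; split.
  - by move=> a ha; rewrite Tformula; apply: T_mem.
  - exact: T_gen.
  - by move=> a _ h0; apply: T_indep h0 => i ie; case: (hun i ie).
split; first exact: part1.
split; first by move=> u w _ _; apply: part2.
split; first exact: P3.
move=> n.
have := P3 n (fun _ => 1) (fun i _ => vge0_unit (v1 HvK)).
have -> : \sum_(i < e) ((fun _ : nat => (1 : K)) i)%:A * piL ^+ i = \sum_(i < e) piL ^+ i.
  by apply: eq_bigr => i _; rewrite alg1 mul1r.
case=> _; apply => i _; split; [exact: oner_neq0 | exact: (v1 HvK)].
Qed.

End Main.

Theorem proposition2p4 (K : fieldType) (L : splittingFieldType K)
  (vK : K -> int) (vL : L -> int) (piK : K) (piL : L) :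
  local_field vK -> local_field vL ->
  (* L/K is a finite Galois extension *)
  galois 1%VS {:L} ->
  (* totally ramified: vL extends vK with ramification index e = [L:K] *)
  (forall a : K, a != 0 -> vL (a%:A) = (\dim {:L})%:Z * vK a) ->
  (* tamely ramified: the residue characteristic does not divide e *)
  (forall p : nat, residue_char vK p -> ~~ (p %| \dim {:L})%N) ->
  (* uniformizers with piL^e = piK *)
  piK != 0 -> vK piK = 1 -> piL != 0 -> vL piL = 1 ->
  piL ^+ (\dim {:L}) = piK%:A ->
  (* unique expansion of elements of O_L *)
  (forall alpha : L, vring vL alpha ->
     exists u : nat -> K, (forall i, (i < \dim {:L})%N -> vring vK (u i)) /\
       alpha = \sum_(i < \dim {:L}) (u i)%:A * piL ^+ i) /\
  (forall u w : nat -> K,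
     (forall i, (i < \dim {:L})%N -> vring vK (u i)) ->
     (forall i, (i < \dim {:L})%N -> vring vK (w i)) ->
     \sum_(i < \dim {:L}) (u i)%:A * piL ^+ i =
       \sum_(i < \dim {:L}) (w i)%:A * piL ^+ i ->
     forall i, (i < \dim {:L})%N -> u i = w i) /\
  (* the characterization of free generators of P_L^n *)
  (forall (n : int) (u : nat -> K),
     (forall i, (i < \dim {:L})%N -> vring vK (u i)) ->
     (free_generator vK (piL ^ n * \sum_(i < \dim {:L}) (u i)%:A * piL ^+ i)
        (vpow vL n)
      <-> (forall i, (i < \dim {:L})%N -> vunit vK (u i)))) /\
  (* in particular for alpha = 1 + piL + ... + piL^(e-1) *)
  (forall n : int,
     free_generator vK (piL ^ n * \sum_(i < \dim {:L}) piL ^+ i) (vpow vL n)).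
Proof.
move=> HK HL Hgal Hram Htame piK0 vpiK piL0 vpiL Hpi.
exact: (main_thm HK HL Hgal Hram Htame piK0 vpiK piL0 vpiL Hpi).
Qed.
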